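(* Let $G$ be a simple graph and let $C=v-u-u_1-u_2-\dots-u_\ell-u'-v$ be a cycle of length at least $6$ in $G$ such that $u-u_1-\dots-u_\ell-u'$ is an induced path of $G$. Then $G$ has an induced cycle of length at least $4$, or $G$ has an induced claw $J$ and a triangle $T$ with $V(J)\cap V(T)\neq\emptyset$.
   Context: A claw is the graph $K_{1,3}$. *)

(* Defs.v *)
From mathcomp Require Import all_boot.
Set Implicit Arguments. Unset Strict Implicit. Unset Printing Implicit Defensive.

Definition simple_graph (T : finType) (e : rel T) : Prop :=
  symmetric e /\ irreflexive e.

Definition induced_cycle (T : finType) (e : rel T) (c : seq T) : Prop :=
  [/\ uniq c, 3 <= size c, cycle e c &
      forall x y, x \in c -> y \in c -> e x y -> (y == next c x) || (x == next c y)].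

Definition induced_claw (T : finType) (e : rel T) (a b1 b2 b3 : T) : Prop :=
  [/\ uniq [:: a; b1; b2; b3], e a b1 && e a b2 && e a b3 &
      ~~ e b1 b2 && ~~ e b1 b3 && ~~ e b2 b3].

Definition triangle (T : finType) (e : rel T) (x y z : T) : Prop :=
  uniq [:: x; y; z] /\ [&& e x y, e y z & e x z].

(* Main.v *)
Require Import Defs.
From mathcomp Require Import all_boot zify.

Lemma ind_cyc (T : finType) (e : rel T) (v : T) (q : seq T) :
  simple_graph e -> uniq (v :: q) -> 1 < size q ->
  e v (nth v q 0) -> e v (nth v q (size q).-1) ->
  (forall a, 0 < a < (size q).-1 -> ~~ e v (nth v q a)) ->
  (forall a b, a < size q -> b < size q ->
     e (nth v q a) (nth v q b) = (a == b.+1) || (b == a.+1)) ->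
  induced_cycle e (v :: q).
Proof.
move=> [esym eirr] Hu Hs H0 Hl Hmid Hq.
have nextE : forall a, a < (size q).+1 ->
    next (v :: q) (nth v (v :: q) a) = nth v q a.
  move=> a Ha; rewrite next_nth mem_nth //=.
  have := @index_uniq _ v a (v :: q) Ha Hu; rewrite /= => ->.
  by [].
have Hv : forall b, b < size q -> e v (nth v q b) -> (b == 0) || (b == (size q).-1).
  move=> b Hb Heb; case: (ltnP 0 b) => [b0|]; last by case: b {Hb Heb}.
  case: (ltnP b (size q).-1) => [bl|bl]; first by rewrite (negbTE (Hmid b _)) in Heb; [|rewrite b0 bl].
  apply/orP; right; apply/eqP; lia.
split=> //.
- change (path e v (rcons q v)); rewrite rcons_path; apply/andP; split.
    apply/(pathP v) => a Ha; case: a Ha => [|a] Ha //=.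
    by rewrite Hq ?eqxx ?orbT //; lia.
  by rewrite esym -nth_last.
move=> x y /(nthP v) [a Ha <-] /(nthP v) [b Hb <-] Hxy.
rewrite !nextE //.
case: a Ha Hxy => [|a] Ha; case: b Hb => [|b] Hb /= Hxy.
- by rewrite eirr in Hxy.
- have := Hv b Hb Hxy; case/orP=> /eqP ->; first by rewrite eqxx.
  rewrite prednK; last lia.
  by rewrite (nth_default v (leqnn _)) eqxx orbT.
- rewrite esym in Hxy; have := Hv a Ha Hxy; case/orP=> /eqP ->; first by rewrite eqxx orbT.
  rewrite prednK; last lia.
  by rewrite (nth_default v (leqnn _)) eqxx.
- rewrite Hq // in Hxy; case/orP: Hxy => /eqP ->.
    by rewrite eqxx orbT.
  by rewrite eqxx.
Qed.

Theorem mainTheorem14 (T : finType) (e : rel T) (v : T) (p : seq T) :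
  simple_graph e ->
  6 <= (size p).+1 ->
  uniq (v :: p) ->
  cycle e (v :: p) ->
  (forall i j, i < size p -> j < size p ->
     e (nth v p i) (nth v p j) = (i == j.+1) || (j == i.+1)) ->
  (exists c : seq T, induced_cycle e c /\ 4 <= size c) \/
  (exists a b1 b2 b3 x y z : T,
     [/\ induced_claw e a b1 b2 b3, triangle e x y z &
         has (fun w => w \in [:: x; y; z]) [:: a; b1; b2; b3]]).
Proof.
move=> Hg Hs Hu Hc Hq.
have Hsg := Hg; case: Hsg => [esym eirr].
have vnp : v \notin p by case/andP: Hu.
have up : uniq p by case/andP: Hu.
have vne : forall a, a < size p -> (v == nth v p a) = false.
  move=> a Ha; apply/negbTE; apply/eqP => Heq; move: vnp; rewrite Heq mem_nth //.
have nne : forall a b, a < size p -> b < size p -> (nth v p a == nth v p b) = (a == b).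
  by move=> a b Ha Hb; rewrite nth_uniq.
have [H0 Hl] : e v (nth v p 0) /\ e v (nth v p (size p).-1).
  move: Hc; rewrite /cycle rcons_path => /andP [Hp Hl].
  split; first by case: p Hs Hp {Hu Hq vnp up vne nne Hl} => // x s _ /= /andP[].
  by rewrite esym nth_last.
case: (boolP [forall k : 'I_(size p), e v (nth v p k)]) => [/forallP Hall | /forallP Hn].
  have Hall' : forall k, k < size p -> e v (nth v p k) by move=> k Hk; exact: (Hall (Ordinal Hk)).
  have h0 : 0 < size p by lia.
  have h1 : 1 < size p by lia.
  have h2 : 2 < size p by lia.
  have h4 : 4 < size p by lia.
  right; exists v, (nth v p 0), (nth v p 2), (nth v p 4), v, (nth v p 0), (nth v p 1).
  split.
  - split.
    + by rewrite /= !inE (vne 0 h0) (vne 2 h2) (vne 4 h4) (nne 0 2 h0 h2) (nne 0 4 h0 h4) (nne 2 4 h2 h4).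
    + by rewrite !Hall'.
    + by rewrite !Hq.
  - split.
    + by rewrite /= !inE (vne 0 h0) (vne 1 h1) (nne 0 1 h0 h1).
    + by rewrite !Hall' ?Hq.
  - by rewrite /= inE eqxx.
left.
have [k Hk] : exists k : 'I_(size p), ~~ e v (nth v p k).
  by apply/existsP; rewrite -negb_forall; apply/forallP.
move: Hk (ltn_ord k); move: (nat_of_ord k) => {}k Hk kn.
have k0 : 0 < k by case: k Hk {kn} => //; rewrite H0.
have kl : k < (size p).-1.
  case: (ltnP k (size p).-1) => // Hk'.
  have Hkk : k = (size p).-1 by lia.
  by move: Hk; rewrite Hkk Hl.
have exi : exists i, (i < k) && e v (nth v p i) by exists 0; rewrite k0 H0.
have ubi : forall i, (i < k) && e v (nth v p i) -> i <= k by move=> i /andP[/ltnW].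
case: (ex_maxnP exi ubi) => i /andP[ik Hi] imax.
have exj : exists j, [&& k < j, j < size p & e v (nth v p j)].
  by exists (size p).-1; rewrite kl Hl andbT; lia.
case: (ex_minnP exj) => j /and3P[kj jn Hj] jmin.
have ij : i < j by apply: ltn_trans ik kj.
pose q := mkseq (fun a => nth v p (i + a)) (j - i).+1.
have sq : size q = (j - i).+1 by rewrite size_mkseq.
have nq : forall a, a < (j - i).+1 -> nth v q a = nth v p (i + a).
  by move=> a Ha; rewrite nth_mkseq.
have uq : uniq (v :: q).
  rewrite cons_uniq andbC /q /mkseq; apply/andP; split.
    rewrite map_inj_in_uniq ?iota_uniq //.
    move=> a b; rewrite !mem_iota => /andP[_ Ha] /andP[_ Hb] /eqP.
    rewrite nth_uniq //; first by rewrite eqn_add2l => /eqP.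
      by apply: leq_trans jn; lia.
    by apply: leq_trans jn; lia.
  apply/negP => /mapP [a]; rewrite mem_iota => /andP[_ Ha] Heq.
  by move: vnp; rewrite Heq mem_nth //; apply: leq_trans jn; rewrite add0n in Ha; lia.
clearbody q.
exists (v :: q); split; last by rewrite /= sq; lia.
apply: ind_cyc => //.
- by rewrite sq; lia.
- by rewrite nq // addn0.
- by rewrite sq /= nq // subnKC // ltnW // (ltn_trans ik kj).
- move=> a; rewrite sq /= => /andP[a0 aj].
  rewrite nq; last lia.
  case: (ltngtP (i + a) k) => [Hlt|Hgt|->] //.
  + apply/negP => He; have := imax (i + a); rewrite Hlt He => /(_ isT); lia.
  + apply/negP => He; have := jmin (i + a); rewrite Hgt He andbT => /(_ _); lia.
- move=> a b; rewrite sq => Ha Hb; rewrite !nq // Hq; try (apply: leq_trans jn; lia).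
  by rewrite -!addnS !eqn_add2l.
Qed.
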